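(* Let $d\ge3$, $\alpha<2$ and $q>\frac{d-\alpha}{d-2}$. Then there exists a positive function $u$ on $\mathbb Z^d$ satisfying $\Delta u(x)+(1+|x|)^{-\alpha}u(x)^q\le0$ for all $x\in\mathbb Z^d$.
   Context: $\mathbb Z^d$ is the lattice graph with $\mu_{xy}=1$ if $\|x-y\|_1=1$ and $\mu_{xy}=0$ otherwise, so $\mu(x)=2d$ and $\Delta u(x)=\frac1{2d}\sum_{y:\|y-x\|_1=1}(u(y)-u(x))$. $|x|$ is the Euclidean norm. *)

(* Defs.v *)
From HB Require Import structures.
From mathcomp Require Import all_boot all_order all_algebra.
From mathcomp Require Import all_classical all_reals all_analysis.
Set Implicit Arguments. Unset Strict Implicit. Unset Printing Implicit Defensive.
Import Order.TTheory GRing.Theory Num.Theory.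
Local Open Scope ring_scope.

Definition lattice (d : nat) := 'rV[int]_d.

Definition unitv (d : nat) (i : 'I_d) : lattice d := \row_j (i == j)%:R.

(* Normalized graph Laplacian on Z^d with mu_xy = 1 for nearest neighbours:
   Delta u(x) = 1/(2d) * sum_{|y-x|_1 = 1} (u y - u x),
   the neighbours being exactly x + e_i and x - e_i, i < d. *)
Definition lapZd (R : realType) (d : nat) (u : lattice d -> R) (x : lattice d) : R :=
  (2 * d%:R)^-1 * \sum_(i < d) ((u (x + unitv i) - u x) + (u (x - unitv i) - u x)).

Definition eucl (R : realType) (d : nat) (x : lattice d) : R :=
  Num.sqrt (\sum_(i < d) ((x ord0 i)%:~R : R) ^+ 2).

(* Main.v *)
Require Import Defs.
From HB Require Import structures.
From mathcomp Require Import all_boot all_order all_algebra.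
From mathcomp Require Import all_classical all_reals all_analysis.
From mathcomp Require Import ring lra.
Import Order.TTheory GRing.Theory Num.Theory.
Import numFieldNormedType.Exports.
Local Open Scope classical_set_scope.
Local Open Scope ring_scope.

Section Helpers.
Variable R : realType.

Lemma powR_expE (y p : R) : 0 < y -> y `^ p = expR (p * ln y).
Proof. by move=> y0; rewrite /powR gt_eqF. Qed.

Lemma ln_le_sub1 (y : R) : 0 < y -> ln y <= y - 1.
Proof.
move=> y0; have := @le_ln1Dx R (y - 1).
rewrite addrCA subrr addr0; apply; lra.
Qed.

Lemma ln_ge_1subV (y : R) : 0 < y -> 1 - y^-1 <= ln y.
Proof.
move=> y0; have yi : 0 < y^-1 by rewrite invr_gt0.
have := @ln_le_sub1 (y^-1) yi.
rewrite lnV ?posrE //; lra.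
Qed.

Lemma powR_tangent (y p : R) : 0 < y -> 0 <= p -> 1 - p * (y - 1) <= y `^ (- p).
Proof.
move=> y0 p0; rewrite powR_expE //.
apply: le_trans (expR_ge1Dx _).
have := @ln_le_sub1 y y0; rewrite mulNr; nra.
Qed.

Lemma powR_low (y p : R) : 0 < y -> 0 <= p ->
  y `^ (- p) - 1 <= p * (1 - y) * y `^ (- (p + 1)).
Proof.
move=> y0 p0.
have ab : y `^ (- p) * y `^ p = 1.
  rewrite -powRD; first by rewrite addNr powRr0.
  by rewrite (gt_eqF y0) implybT.
have e : y `^ (- (p + 1)) = y `^ (- p) * y^-1.
  rewrite opprD powRD; first by rewrite powR_inv1 ?ltW.
  by rewrite (gt_eqF y0) implybT.
have hb : 1 + p * (1 - y^-1) <= y `^ p.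
  rewrite powR_expE //; apply: le_trans (expR_ge1Dx _).
  have := @ln_ge_1subV y y0; nra.
have a0 : 0 < y `^ (- p) := powR_gt0 _ y0.
rewrite e.
have -> : p * (1 - y) * (y `^ (- p) * y^-1) = y `^ (- p) * (p * (1 - y) * y^-1) by ring.
have -> : y `^ (- p) - 1 = y `^ (- p) * (1 - y `^ p) by rewrite mulrBr ab mulr1.
rewrite ler_pM2l //.
have -> : p * (1 - y) * y^-1 = p * (y^-1 - 1).
  by field; rewrite (gt_eqF y0).
lra.
Qed.
Lemma test (g C : R) (y : R) : 0 < y ->
  is_derive y 1 (fun y : R => 1 - g * (y - 1) + C * (y - 1)^+2 - y `^ (- g))
   (- g + 2 * C * (y - 1) + g * y `^ (- g - 1)).
Proof.
move=> y0.
have h1 : is_derive y (1:R) (fun y : R => y - 1) 1.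
  have := @is_deriveB R R R (@id R) (cst (1:R)) y 1 1 0 _ _.
  rewrite subr0. exact.
have h2 : is_derive y (1:R) (fun y : R => g * (y - 1)) g.
  have := @is_deriveZ R R R (fun y : R => y - 1) g y 1 1 h1.
  rewrite /GRing.scale /= mulr1; exact.
have h3 : is_derive y (1:R) (fun y : R => (y - 1)^+2) (2 * (y - 1)).
  have := @is_deriveX R R (fun y : R => y - 1) 2 y 1 1 h1.
  rewrite /GRing.scale /= mulr1 expr1 mulr_natl; exact.
have h4 := @is_derive1_powR R (- g) y y0.
have h5 := @is_deriveB R R R (cst (1:R)) (fun y : R => g * (y - 1)) y 1 0 g (is_derive_cst _ _ _) h2.
have h6 := @is_deriveZ R R R (fun y : R => (y - 1)^+2) C y 1 _ h3.
have h7 := @is_deriveD R R R _ _ y 1 _ _ h5 h6.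
have h8 := @is_deriveB R R R _ (fun y : R => y `^ (- g)) y 1 _ _ h7 h4.
move: h8; rewrite /GRing.scale /=.
have -> : 0 - g + C * (2 * (y - 1)) - - g * y `^ (- g - 1) = - g + 2 * C * (y - 1) + g * y `^ (- g - 1).
  by rewrite add0r mulNr opprK mulrA (mulrC C).
exact.
Qed.

Lemma powR_anti (m y p : R) : 0 < m -> m <= y -> 0 <= p -> y `^ (-p) <= m `^ (-p).
Proof.
move=> m0 my p0; have y0 : 0 < y by apply: lt_le_trans my.
rewrite !powR_expE // ler_expR !mulNr lerN2 ler_wpM2l // ler_ln // posrE.
Qed.

Lemma key1D (g m z : R) : 0 < g -> 0 < m -> m <= 1 -> m <= z ->
  z `^ (- g) <= 1 - g * (z - 1) + g * (g + 1) / 2 * m `^ (- (g + 2)) * (z - 1) ^+ 2.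
Proof.
move=> g0 m0 m1 mz.
have z0 : 0 < z by apply: lt_le_trans mz.
set M := m `^ (- (g + 2)).
have M1 : 1 <= M.
  have := @powR_anti m 1 (g + 2) m0 m1 (ltW _).
  rewrite powR1; apply; lra.
set C := g * (g + 1) / 2 * M.
pose G := fun y : R => 1 - g * (y - 1) + C * (y - 1)^+2 - y `^ (- g).
pose dGf := fun y : R => - g + 2 * C * (y - 1) + g * y `^ (- g - 1).
have dG (y : R) : 0 < y -> is_derive y 1 G (dGf y).
  exact: test.
have cG a b : 0 < a -> {within `[a, b], continuous G}.
  move=> a0; apply: derivable_within_continuous => x; rewrite in_itv /= => /andP[ax _].
  by have [] := dG x (lt_le_trans a0 ax).
have G1 : G 1 = 0 by rewrite /G powR1 subrr mulr0 expr0n /= mulr0 !subr0 addr0 subrr.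
suff : 0 <= G z by rewrite /G subr_ge0.
have [z1|z1] := leP 1 z.
  have [x|c cI e] := @MVT_segment R G dGf 1 z z1 _ (cG 1 z ltr01).
    rewrite in_itv /= => /andP[x1 _]; apply: dG; exact: lt_trans ltr01 x1.
  move: cI; rewrite in_itv /= => /andP[c1 cz].
  rewrite G1 subr0 in e; rewrite e /dGf.
  have c0 : 0 < c := lt_le_trans ltr01 c1.
  have := @powR_tangent c (g + 1) c0 (ltW _).
  rewrite -opprD /C; set P := c `^ (- (g + 1)) => hP.
  have h1 : g * (1 - (g + 1) * (c - 1)) <= g * P by rewrite ler_pM2l; [apply: hP; lra|].
  have h2 : 0 <= g * (g + 1) * (c - 1) * (M - 1) by rewrite !mulr_ge0 //; lra.
  apply: mulr_ge0; last by lra.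
  nra.
have z1' : z <= 1 := ltW z1.
have [x|c cI e] := @MVT_segment R G dGf z 1 z1' _ (cG z 1 z0).
  rewrite in_itv /= => /andP[x1 _]; apply: dG; exact: lt_trans z0 x1.
move: cI; rewrite in_itv /= => /andP[zc c1].
rewrite G1 in e.
have c0 : 0 < c := lt_le_trans z0 zc.
have := @powR_low c (g + 1) c0 (ltW _).
have -> : g + 1 + 1 = g + 2 by rewrite -addrA; congr (_ + _).
have hQ := @powR_anti m c (g + 2) m0 (le_trans mz zc) (ltW _).
rewrite -/M in hQ.
set Q := c `^ (- (g + 2)) in hQ *.
set P := c `^ (- (g + 1)) => hP.
have hd : dGf c <= 0.
  rewrite /dGf -opprD -/P /C.
  have h1 : g * (P - 1) <= g * ((g + 1) * (1 - c) * Q) by rewrite ler_pM2l //; apply: hP; lra.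
  have h2 : g * (g + 1) * (1 - c) * Q <= g * (g + 1) * (1 - c) * M.
    apply: ler_wpM2l; [rewrite !mulr_ge0 //; lra | apply: hQ; lra].
  nra.
have : 0 <= - (dGf c * (1 - z)) by rewrite oppr_ge0 mulr_le0_ge0 //; lra.
by rewrite -e sub0r opprK.
Qed.
End Helpers.

Section L.
Variable R : realType.
Variable d : nat.
Definition sq (x : lattice d) : R := \sum_(i < d) ((x ord0 i)%:~R : R) ^+ 2.

Lemma sq_ge0 (x : lattice d) : 0 <= sq x.
Proof. by apply: sumr_ge0 => i _; rewrite sqr_ge0. Qed.

Lemma sq_ge_coord (x : lattice d) (i : 'I_d) : ((x ord0 i)%:~R : R) ^+ 2 <= sq x.
Proof.
rewrite /sq (bigD1 i) //= lerDl; by apply: sumr_ge0 => j _; rewrite sqr_ge0.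
Qed.

Lemma sq_gen (x y : lattice d) (i : 'I_d) (c : int) : (forall j, y ord0 j = x ord0 j + (i == j)%:R * c) ->
  sq y = sq x + 2 * (x ord0 i)%:~R * c%:~R + (c%:~R) ^+ 2.
Proof.
move=> hy; rewrite /sq (bigD1 i) //= [in RHS](bigD1 i) //= hy eqxx mul1r.
have -> : \sum_(j < d | j != i) ((y ord0 j)%:~R : R) ^+ 2 =
          \sum_(j < d | j != i) ((x ord0 j)%:~R : R) ^+ 2.
  apply: eq_bigr => j ji; rewrite hy eq_sym (negbTE ji) mul0r addr0 //.
rewrite intrD; ring.
Qed.

Lemma sq_plus (x : lattice d) (i : 'I_d) : sq (x + unitv i) = sq x + 2 * (x ord0 i)%:~R + 1.
Proof.
rewrite (@sq_gen x _ i 1) ?mulr1 ?expr1n // => j.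
by rewrite !mxE mulr1.
Qed.

Lemma sq_minus (x : lattice d) (i : 'I_d) : sq (x - unitv i) = sq x - 2 * (x ord0 i)%:~R + 1.
Proof.
rewrite (@sq_gen x _ i (-1)); last by move=> j; rewrite !mxE mulrN1.
by rewrite sqrrN expr1n mulrN1 -mulrN.
Qed.
End L.

Lemma inner_arith (R : realFieldType) (g mu D kappa s v : R) :
 g/4 * (4*(g+1)*mu*D*v) <= g/4*(2*D - 4*(g+1)) ->
 4*g*(g+1)*mu*(s*v) <= 4*g*(g+1)*mu*1 ->
 g*(mu*(2*(4*(g+1)))) = g*(4*(g+1) + 2*D) ->
 kappa*(8*D) = g*(2*D - 4*(g+1)) ->
 -(2*g)*D + 2*(g*(g+1)/2*mu)*D*v + 8*(g*(g+1)/2*mu)*s*v <= -(2*D)*kappa.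
Proof. move=> h1 h2 h3 h4. lra. Qed.

Theorem theorem7p5 (R : realType) (d : nat) (alpha q : R) :
  (3 <= d)%N -> alpha < 2 -> (d%:R - alpha) / (d%:R - 2) < q ->
  exists u : lattice d -> R,
    (forall x, 0 < u x) /\
    (forall x, lapZd u x + powR (1 + eucl R x) (- alpha) * powR (u x) q <= 0).
Proof.
move=> d3 a2 hq.
set D : R := d%:R.
have D3 : 3 <= D by rewrite /D (ler_nat R 3 d).
have D2 : 0 < D - 2 by lra.
have hq' : 2 - alpha < (q - 1) * (D - 2).
  have e : (D - alpha) / (D - 2) = 1 + (2 - alpha) / (D - 2).
    by field; rewrite gt_eqF.
  move: hq; rewrite -/D e -ltrBrDl ltr_pdivrMr //; lra.
have q1 : 0 < q - 1 by nra.
set a0 := (2 - alpha) / (2 * (q - 1)).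
have ha0 : a0 * (2 * (q - 1)) = 2 - alpha by rewrite /a0 mulfVK // gt_eqF //; lra.
set g := (a0 + (D - 2) / 2) / 2.
have g0 : 0 < g by rewrite /g; nra.
have gq : 1 - alpha / 2 < g * (q - 1) by rewrite /g; nra.
set P := 4 * (g + 1).
have PD : P < 2 * D by rewrite /P /g; nra.
have P0 : 0 < P by rewrite /P; lra.
set mu := (P + 2 * D) / (2 * P).
have hmu : mu * (2 * P) = P + 2 * D by rewrite /mu mulfVK // gt_eqF //; lra.
have mu1 : 1 < mu by nra.
have mu0 : 0 < mu by lra.
set m := mu `^ (- (g + 2)^-1).
have hM : m `^ (- (g + 2)) = mu.
  rewrite /m -powRrM mulrNN mulVf ?powRr1 //; [lra | rewrite gt_eqF //; lra].
have m0 : 0 < m by exact: powR_gt0.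
have m1 : m < 1.
  rewrite lt_neqAle; apply/andP; split.
    apply/negP => /eqP m1; move: hM; rewrite m1 powR1 => mu1'; lra.
  have := @powR_anti _ 1 mu (g + 2)^-1 ltr01 (ltW mu1) (ltW _).
  by rewrite powR1; apply; rewrite invr_gt0; lra.
set k := 1 - m.
have k0 : 0 < k by rewrite /k; lra.
set A := (k ^+ 2)^-1 + 4 * (g + 1) * mu * D / (2 * D - P) + 1.
have hA1 : (k ^+ 2)^-1 * k ^+ 2 = 1 by rewrite mulVf // gt_eqF // exprn_gt0.
have hA2 : 4 * (g + 1) * mu * D / (2 * D - P) * (2 * D - P) = 4 * (g + 1) * mu * D.
  by rewrite mulfVK // gt_eqF //; lra.
have kinv0 : 0 <= (k ^+ 2)^-1 by rewrite invr_ge0 exprn_ge0 //; lra.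
have t0 : 0 <= 4 * (g + 1) * mu * D / (2 * D - P).
  apply: divr_ge0; last lra; apply: mulr_ge0; last lra; apply: mulr_ge0; lra.
have A1 : 1 <= A by rewrite /A; lra.
have A0 : 0 < A by lra.
have kA : 1 <= k ^+ 2 * A.
  have : (k ^+ 2)^-1 <= A by rewrite /A; lra.
  move=> h; have k20 : 0 < k ^+ 2 by rewrite exprn_gt0.
  have := ler_wpM2l (ltW k20) h; rewrite mulrC hA1 //.
have AD : 4 * (g + 1) * mu * D <= (2 * D - P) * A.
  have : 4 * (g + 1) * mu * D / (2 * D - P) <= A by rewrite /A; lra.
  move=> h; have h2 : 0 <= 2 * D - P by lra.
  by have := ler_wpM2r h2 h; rewrite hA2 [A * _]mulrC.
set C := g * (g + 1) / 2 * mu.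
set kappa := g * (2 * D - P) / (8 * D).
have kap0 : 0 < kappa by rewrite /kappa divr_gt0 //; nra.
have hkap : kappa * (8 * D) = g * (2 * D - P) by rewrite /kappa mulfVK // gt_eqF //; lra.
set c0 := `|alpha| / 2 * (ln 2 + ln A).
set c1 := (ln kappa - c0) / (q - 1).
have hc1 : c1 * (q - 1) = ln kappa - c0 by rewrite /c1 mulfVK // gt_eqF.
exists (fun x => expR (c1 - g * ln (A + sq R d x))).
split; first by move=> x; exact: expR_gt0.
move=> x.
set s := sq R d x.
have s0 : 0 <= s := sq_ge0 R d x.
set T := A + s.
have TA : A <= T by rewrite /T; lra.
have T1 : 1 <= T by lra.
have T0 : 0 < T by lra.
set L := ln T.
have L0 : 0 <= L := ln_ge0 T1.
set W := expR (c1 - g * L).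
have W0 : 0 < W := expR_gt0 _.
set v := T^-1.
have v0 : 0 < v by rewrite invr_gt0.
have Tv : T * v = 1 by rewrite mulfV // gt_eqF.
have Wv : W * v = expR (c1 - g * L - L).
  by rewrite expRD expRN /L lnK // posrE.
have lapb : lapZd (fun x0 => expR (c1 - g * ln (A + sq R d x0))) x <= - kappa * (W * v).
  set E := expR c1.
  have E0 : 0 < E := expR_gt0 _.
  have uE (y : lattice d) : expR (c1 - g * ln (A + sq R d y)) = E * (A + sq R d y) `^ (- g).
    rewrite expRD powR_expE ?mulNr //.
    by apply: lt_le_trans A0 _; rewrite lerDl sq_ge0.
  have WE : W = E * T `^ (- g) by rewrite /W /L -uE.
  have nb (h : R) : m * T <= T + h ->
      (T + h) `^ (- g) <= T `^ (- g) * (1 - g * (h * v) + C * (h * v) ^+ 2).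
    move=> hm.
    have Th : 0 < T + h by apply: lt_le_trans hm; exact: mulr_gt0.
    have -> : T + h = T * ((T + h) * v) by rewrite mulrCA Tv mulr1.
    rewrite powRM; last 2 first.
    - exact: ltW.
    - by apply: mulr_ge0; apply: ltW.
    apply: ler_wpM2l; first exact: powR_ge0.
    have mz : m <= (T + h) * v by rewrite /v ler_pdivlMr.
    have := @key1D R g m _ g0 m0 (ltW m1) mz; rewrite hM.
    have -> : (T + h) * v - 1 = h * v by rewrite mulrDl Tv -/v; ring.
    by rewrite /C.
  have condp (X : R) : X ^+ 2 <= s -> m * T <= T + (2 * X + 1).
    move=> hX.
    have h1 : 0 <= k * (k * (A + X ^+ 2) + 2 * X).
      have := sqr_ge0 (k * X + 1); rewrite !expr2 in kA hX *; nra.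
    have h2 : 0 <= k * (A + X ^+ 2) + 2 * X by rewrite (pmulr_rge0 _ k0) in h1.
    have h3 : k * (A + X ^+ 2) <= k * T by apply: ler_wpM2l; [lra | rewrite /T; lra].
    rewrite /k in h2 h3; lra.
  set K1 := - (2 * g) * v + 2 * C * v ^+ 2.
  set K2 := 8 * C * v ^+ 2.
  have termb (i : 'I_d) :
      (expR (c1 - g * ln (A + sq R d (x + unitv i))) - expR (c1 - g * ln (A + sq R d x))) +
      (expR (c1 - g * ln (A + sq R d (x - unitv i))) - expR (c1 - g * ln (A + sq R d x)))
      <= W * (K1 + K2 * ((x ord0 i)%:~R : R) ^+ 2).
    set X := ((x ord0 i)%:~R : R).
    have hX : X ^+ 2 <= s := sq_ge_coord R d x i.
    rewrite !uE sq_plus sq_minus -/s -/T.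
    have ep : A + (s + 2 * X + 1) = T + (2 * X + 1) by rewrite /T; ring.
    have em : A + (s - 2 * X + 1) = T + (2 * (- X) + 1) by rewrite /T; ring.
    have hX' : (- X) ^+ 2 <= s by rewrite sqrrN.
    rewrite ep em.
    have hp := ler_wpM2l (ltW E0) (nb _ (condp X hX)).
    have hm := ler_wpM2l (ltW E0) (nb _ (condp (- X) hX')).
    have -> : W * (K1 + K2 * X ^+ 2) =
      E * (T `^ (- g) * (1 - g * ((2 * X + 1) * v) + C * ((2 * X + 1) * v) ^+ 2))
      - E * T `^ (- g) +
      (E * (T `^ (- g) * (1 - g * ((2 * (- X) + 1) * v) + C * ((2 * (- X) + 1) * v) ^+ 2))
      - E * T `^ (- g)).
      rewrite WE /K1 /K2; ring.
    lra.
  rewrite /lapZd /=.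
  have sb : \sum_(i < d)
      ((expR (c1 - g * ln (A + sq R d (x + unitv i))) - expR (c1 - g * ln (A + sq R d x))) +
      (expR (c1 - g * ln (A + sq R d (x - unitv i))) - expR (c1 - g * ln (A + sq R d x))))
      <= \sum_(i < d) W * (K1 + K2 * ((x ord0 i)%:~R : R) ^+ 2).
    by apply: ler_sum => i _; exact: termb.
  rewrite -/D.
  have D0 : 0 < D by lra.
  have iD0 : 0 <= (2 * D)^-1 by rewrite invr_ge0; lra.
  apply: le_trans (ler_wpM2l iD0 sb) _.
  have sE : \sum_(i < d) ((x ord0 i)%:~R : R) ^+ 2 = s by [].
  rewrite -mulr_sumr big_split /= sumr_const card_ord -mulr_sumr sE -[K1 *+ d]mulr_natr -/D.
  have hAv : A * v <= 1 by rewrite -Tv; apply: ler_wpM2r; [exact: ltW|].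
  have hsv : s * v <= 1 by rewrite -Tv; apply: ler_wpM2r; [exact: ltW| rewrite /T; lra].
  have hDv : 4 * (g + 1) * mu * D * v <= 2 * D - P.
    have PD' : 0 <= 2 * D - P by lra.
    have h1 := ler_wpM2r (ltW v0) AD.
    have h2 := ler_wpM2l PD' hAv.
    rewrite mulr1 in h2; rewrite !mulrA in h1 h2 *; exact: le_trans h1 h2.
  have hmu' : g * (mu * (2 * P)) = g * (P + 2 * D) by rewrite hmu.
  have inner : - (2 * g) * D + 2 * C * D * v + 8 * C * s * v <= - (2 * D) * kappa.
    have g4 : 0 <= g / 4 by lra.
    have g5 : 0 <= 4 * g * (g + 1) * mu by apply: mulr_ge0; [nra | lra].
    have t1 := ler_wpM2l g4 hDv.
    have t2 := ler_wpM2l g5 hsv.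
    exact: (@inner_arith R g mu D kappa s v t1 t2 hmu' hkap).
  have core : K1 * D + K2 * s <= - (2 * D) * kappa * v.
    have -> : K1 * D + K2 * s = v * (- (2 * g) * D + 2 * C * D * v + 8 * C * s * v)
      by rewrite /K1 /K2; ring.
    rewrite [X in _ <= X]mulrC; apply: ler_wpM2l => //; exact: ltW.
  apply: le_trans (_ : _ <= (2 * D)^-1 * (W * (- (2 * D) * kappa * v))) _.
    apply: ler_wpM2l => //; apply: ler_wpM2l => //; exact: ltW.
  have -> : (2 * D)^-1 * (W * (- (2 * D) * kappa * v)) = - kappa * (W * v).
    by field; rewrite gt_eqF.
  exact: lexx.
have nlb : powR (1 + eucl R x) (- alpha) * powR (expR (c1 - g * L)) q <= kappa * (W * v).
  set e := eucl R x.
  have e0 : 0 <= e := sqrtr_ge0 _.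
  have he : e ^+ 2 = s by rewrite /e /eucl sqr_sqrtr // sq_ge0.
  have e1 : 0 < 1 + e by lra.
  set l := ln (1 + e).
  have w1 : (1 + e) ^+ 2 <= 2 * T.
    rewrite /T -he; have := sqr_ge0 (e - 1); rewrite !expr2; nra.
  have w2 : T <= A * (1 + e) ^+ 2.
    rewrite /T -he !expr2; have h1 : 0 <= (A - 1) * (e * e) by apply: mulr_ge0; nra.
    nra.
  have l2 : ln ((1 + e) ^+ 2) = 2 * l by rewrite (lnXn 2 e1) mulr_natl.
  have ew0 : 0 < (1 + e) ^+ 2 by rewrite exprn_gt0.
  have up : 2 * l <= ln 2 + L.
    rewrite -l2 /L -lnM; last 2 first.
    - by rewrite posrE; lra.
    - by rewrite posrE.
    rewrite ler_ln ?posrE //; apply: mulr_gt0 => //; lra.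
  have lo : L <= ln A + 2 * l.
    rewrite -l2 /L -lnM; last 2 first.
    - by rewrite posrE.
    - by rewrite posrE.
    by rewrite ler_ln ?posrE //; apply: mulr_gt0.
  have ln20 : 0 <= ln (2 : R) by apply: ln_ge0; lra.
  have lnA0 : 0 <= ln A := ln_ge0 A1.
  have hexp : - alpha * l <= c0 - alpha / 2 * L.
    rewrite /c0; have [a0'|a0'] := leP 0 alpha.
      rewrite ger0_norm //; nra.
    rewrite ltr0_norm //; nra.
  rewrite powR_expE // powR_expE ?expR_gt0 // expRK -expRD Wv.
  have kE : expR (ln kappa) = kappa by rewrite lnK // posrE.
  rewrite -{1}kE -expRD ler_expR.
  have hc1' : q * c1 = c1 + (ln kappa - c0) by rewrite -hc1; ring.
  have : (g + 1) * L <= (alpha / 2 + q * g) * L by apply: ler_wpM2r => //; lra.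
  rewrite -/l; nra.
rewrite -/s -/T -/L; lra.
Qed.
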